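(* There is an algorithm that, given $x \in \mathbb{R}^z$ and $p =\big( (\min_1, \max_1),\dots, (\min_\ell, \max_\ell)\big) \in (\mathrm{set}(x)^2)^\ell$, runs in $O(z\ell)$ time and returns True if and only if there exists a traversal $T\in\mathcal{T}_{z,\ell}$ such that $p$ is the $\ell$-profile of $(x,T)$.
   Context: For $x=(x_1,\dots,x_z)\in\mathbb{R}^z$, $\mathrm{set}(x)=\{x_i:1\le i\le z\}$. A traversal between sequences of lengths $z$ and $\ell$ is a sequence of index pairs from $(1,1)$ to $(z,\ell)$ where each step increases each index by $0$ or $1$ and at least one index by $1$; $\mathcal{T}_{z,\ell}$ is the set of traversals. For $T\in\mathcal{T}_{z,\ell}$ the traversal sectors are $S_j^{(x,T)}=\{x_i:(i,j)\in T\}$, $j\in[\ell]$, and the $\ell$-profile of $(x,T)$ is $\big((\min S_j^{(x,T)},\max S_j^{(x,T)})\big)_{j=1}^{\ell}$. *)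

(* Defs.v *)
From Stdlib Require Import Reals List Arith Lia.
Import ListNotations.
Open Scope R_scope.

(** [x : list R] is x in R^z with z = length x; x_i is [nth i x 0]
    (index i in 0..z-1 corresponds to the paper's index i+1). *)

Definition set_of (x : list R) (y : R) : Prop := In y x.

Definition trav_step (a b : nat * nat) : Prop :=
  (fst b = fst a \/ fst b = S (fst a)) /\
  (snd b = snd a \/ snd b = S (snd a)) /\
  (fst b <> fst a \/ snd b <> snd a).

Fixpoint trav_steps (a : nat * nat) (T : list (nat * nat)) : Prop :=
  match T with
  | [] => True
  | b :: T' => trav_step a b /\ trav_steps b T'
  end.

Definition is_traversal (z l : nat) (T : list (nat * nat)) : Prop :=
  (0 < z)%nat /\ (0 < l)%nat /\
  match T with
  | [] => False
  | a :: T' => a = (0%nat, 0%nat) /\ trav_steps a T' /\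
               last T a = (Nat.pred z, Nat.pred l)
  end.

Definition sector (x : list R) (T : list (nat * nat)) (j : nat) (y : R) : Prop :=
  exists i, In (i, j) T /\ y = nth i x 0.

Definition is_min (S : R -> Prop) (m : R) : Prop := S m /\ forall y, S y -> m <= y.
Definition is_max (S : R -> Prop) (M : R) : Prop := S M /\ forall y, S y -> y <= M.

Definition is_profile (x : list R) (T : list (nat * nat)) (l : nat)
    (p : list (R * R)) : Prop :=
  length p = l /\
  forall j, (j < l)%nat ->
    is_min (sector x T j) (fst (nth j p (0, 0))) /\
    is_max (sector x T j) (snd (nth j p (0, 0))).

(** * Model of computation: a unit-cost real-RAM (while-language)

   Nat registers and a 2-D nat memory (unit-cost +, truncated -, =, <),
   real registers and a 2-D real memory (unit-cost +, -, *, =, <, constants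
   0 and 1; no floor or real->nat conversion). *)

Inductive nexp : Type :=
  | NConst (n : nat)
  | NVar (v : nat)
  | NAdd (a b : nexp)
  | NSub (a b : nexp)
  | NLenX
  | NLenP
  | NMem (a b : nexp).

Inductive rexp : Type :=
  | RZero | ROne
  | RVar (v : nat)
  | RAdd (a b : rexp) | RSub (a b : rexp) | RMul (a b : rexp)
  | RX (i : nexp)
  | RPmin (j : nexp)
  | RPmax (j : nexp)
  | RMem (a b : nexp).

Inductive bexp : Type :=
  | BTrue
  | BNot (b : bexp)
  | BAnd (b1 b2 : bexp)
  | BEqN (a b : nexp) | BLtN (a b : nexp)
  | BEqR (a b : rexp) | BLtR (a b : rexp).

Inductive cmd : Type :=
  | CSkip
  | CNAsgn (v : nat) (e : nexp)
  | CRAsgn (v : nat) (e : rexp)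
  | CNStore (a b : nexp) (e : nexp)
  | CRStore (a b : nexp) (e : rexp)
  | CSeq (c1 c2 : cmd)
  | CIf (b : bexp) (c1 c2 : cmd)
  | CWhile (b : bexp) (c : cmd).

Record state : Type := mkState {
  nvars : nat -> nat;
  rvars : nat -> R;
  nmem : nat -> nat -> nat;
  rmem : nat -> nat -> R }.

Definition init_state : state :=
  mkState (fun _ => 0%nat) (fun _ => 0) (fun _ _ => 0%nat) (fun _ _ => 0).

Section Eval.
Variables (x : list R) (p : list (R * R)).

Fixpoint neval (s : state) (e : nexp) : nat :=
  match e with
  | NConst n => n
  | NVar v => nvars s v
  | NAdd a b => (neval s a + neval s b)%nat
  | NSub a b => (neval s a - neval s b)%nat
  | NLenX => length x
  | NLenP => length p
  | NMem a b => nmem s (neval s a) (neval s b)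
  end.

Fixpoint reval (s : state) (e : rexp) : R :=
  match e with
  | RZero => 0
  | ROne => 1
  | RVar v => rvars s v
  | RAdd a b => reval s a + reval s b
  | RSub a b => reval s a - reval s b
  | RMul a b => reval s a * reval s b
  | RX i => nth (neval s i) x 0
  | RPmin j => fst (nth (neval s j) p (0, 0))
  | RPmax j => snd (nth (neval s j) p (0, 0))
  | RMem a b => rmem s (neval s a) (neval s b)
  end.

Fixpoint beval (s : state) (b : bexp) : bool :=
  match b with
  | BTrue => true
  | BNot b => negb (beval s b)
  | BAnd b1 b2 => andb (beval s b1) (beval s b2)
  | BEqN a c => Nat.eqb (neval s a) (neval s c)
  | BLtN a c => Nat.ltb (neval s a) (neval s c)
  | BEqR a c => if Req_EM_T (reval s a) (reval s c) then true else false
  | BLtR a c => if Rlt_dec (reval s a) (reval s c) then true else false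
  end.

Definition upd {A} (f : nat -> A) (v : nat) (a : A) : nat -> A :=
  fun w => if Nat.eqb w v then a else f w.

Definition upd2 {A} (f : nat -> nat -> A) (i j : nat) (a : A) : nat -> nat -> A :=
  fun i' j' => if andb (Nat.eqb i' i) (Nat.eqb j' j) then a else f i' j'.

(** [exec s c k s']: running c from state s terminates in state s'
    after exactly k unit-cost steps.  (The semantics is deterministic.) *)
Inductive exec : state -> cmd -> nat -> state -> Prop :=
  | ExSkip s : exec s CSkip 1 s
  | ExNAsgn s v e :
      exec s (CNAsgn v e) 1
        (mkState (upd (nvars s) v (neval s e)) (rvars s) (nmem s) (rmem s))
  | ExRAsgn s v e :
      exec s (CRAsgn v e) 1
        (mkState (nvars s) (upd (rvars s) v (reval s e)) (nmem s) (rmem s))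
  | ExNStore s a b e :
      exec s (CNStore a b e) 1
        (mkState (nvars s) (rvars s)
           (upd2 (nmem s) (neval s a) (neval s b) (neval s e)) (rmem s))
  | ExRStore s a b e :
      exec s (CRStore a b e) 1
        (mkState (nvars s) (rvars s) (nmem s)
           (upd2 (rmem s) (neval s a) (neval s b) (reval s e)))
  | ExSeq s c1 c2 k1 k2 s1 s2 :
      exec s c1 k1 s1 -> exec s1 c2 k2 s2 -> exec s (CSeq c1 c2) (k1 + k2) s2
  | ExIfT s b c1 c2 k s' :
      beval s b = true -> exec s c1 k s' -> exec s (CIf b c1 c2) (S k) s'
  | ExIfF s b c1 c2 k s' :
      beval s b = false -> exec s c2 k s' -> exec s (CIf b c1 c2) (S k) s'
  | ExWhileF s b c :
      beval s b = false -> exec s (CWhile b c) 1 s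
  | ExWhileT s b c k1 k2 s1 s2 :
      beval s b = true -> exec s c k1 s1 -> exec s1 (CWhile b c) k2 s2 ->
      exec s (CWhile b c) (S (k1 + k2)) s2.

End Eval.

Definition output (s : state) : bool := negb (Nat.eqb (nvars s 0) 0).

(* Main.v *)
Require Import Defs.
From Stdlib Require Import Reals List Arith Lia Lra.
Import ListNotations.
Open Scope R_scope.

Definition mn (p : list (R*R)) j := fst (nth j p (0,0)).
Definition mx (p : list (R*R)) j := snd (nth j p (0,0)).
Definition xi (x : list R) i := nth i x 0.
Definition hmb x p i j : bool := if Req_EM_T (xi x i) (mn p j) then true else false.
Definition hxb x p i j : bool := if Req_EM_T (xi x i) (mx p j) then true else false.
Definition inr x p i j : Prop := mn p j <= xi x i <= mx p j.

Inductive Fp (x : list R) (p : list (R*R)) : nat -> nat -> bool -> bool -> Prop :=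
 | Fend i j a b : inr x p i j -> S i = length x -> S j = length p ->
     (a || hmb x p i j)%bool = true -> (b || hxb x p i j)%bool = true -> Fp x p i j a b
 | Fright i j a b : inr x p i j -> (S i < length x)%nat ->
     Fp x p (S i) j (a || hmb x p i j) (b || hxb x p i j) -> Fp x p i j a b
 | Fup i j a b : inr x p i j -> (a || hmb x p i j)%bool = true -> (b || hxb x p i j)%bool = true ->
     (S j < length p)%nat -> Fp x p i (S j) false false -> Fp x p i j a b
 | Fdiag i j a b : inr x p i j -> (a || hmb x p i j)%bool = true -> (b || hxb x p i j)%bool = true ->
     (S j < length p)%nat -> (S i < length x)%nat -> Fp x p (S i) (S j) false false -> Fp x p i j a b.

Definition wit x (T : list (nat*nat)) j (v : R) := exists i, In (i,j) T /\ xi x i = v.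

Lemma hmb_true x p i j : hmb x p i j = true <-> xi x i = mn p j.
Proof. unfold hmb; destruct Req_EM_T; split; congruence. Qed.
Lemma hxb_true x p i j : hxb x p i j = true <-> xi x i = mx p j.
Proof. unfold hxb; destruct Req_EM_T; split; congruence. Qed.

Lemma step_cases a b : trav_step a b ->
  b = (S (fst a), snd a) \/ b = (fst a, S (snd a)) \/ b = (S (fst a), S (snd a)).
Proof.
  destruct a as [i j], b as [i' j']; unfold trav_step; simpl.
  intros [[->| ->] [[->| ->] [H|H]]]; try congruence; auto.
Qed.

Lemma last_default {A} (f c e : A) L : last (f::L) c = last (f::L) e.
Proof. revert f; induction L as [|g L IH]; intros f; [reflexivity|].
  change (last (g::L) c = last (g::L) e). apply IH. Qed.
Lemma last_cons' {A} (e c : A) L : last (e::L) c = last L e.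
Proof. destruct L as [|f L]; [reflexivity|]. change (last (f::L) c = last (f::L) e). apply last_default. Qed.

Lemma steps_bounds c S : trav_steps c S -> forall d, In d S ->
  (fst c <= fst d <= fst (last S c) /\ snd c <= snd d <= snd (last S c))%nat.
Proof.
  revert c; induction S as [|e S IH]; intros c H d Hd; [destruct Hd|].
  destruct H as [Hs Ht].
  assert (Hl : last (e::S) c = last S e) by apply last_cons'.
  rewrite Hl.
  destruct (step_cases _ _ Hs) as [E|[E|E]];
  (destruct Hd as [<-|Hd];
   [ destruct S as [|f S']; [simpl; rewrite E; simpl; lia|];
     assert (In f (f::S')) by (left; reflexivity);
     specialize (IH e Ht f H); rewrite E in *; simpl in *; lia
   | specialize (IH e Ht d Hd); rewrite E in *; simpl in *; lia]).
Qed.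

Lemma Fp_sound x p i j a b : Fp x p i j a b ->
  exists L, trav_steps (i,j) L /\ last L (i,j) = (Nat.pred (length x), Nat.pred (length p)) /\
   (forall d, In d ((i,j)::L) -> inr x p (fst d) (snd d)) /\
   (forall j', (j < j' < length p)%nat -> wit x ((i,j)::L) j' (mn p j') /\ wit x ((i,j)::L) j' (mx p j')) /\
   (a = true \/ wit x ((i,j)::L) j (mn p j)) /\ (b = true \/ wit x ((i,j)::L) j (mx p j)).
Proof.
  induction 1.
  - exists []. simpl. split; [exact I|]. split; [f_equal; lia|].
    split; [intros d [<-|[]]; assumption|]. split; [intros; lia|].
    split.
    + destruct a; [left; auto|right]. simpl in H2. apply hmb_true in H2. exists i; simpl; auto.
    + destruct b; [left; auto|right]. simpl in H3. apply hxb_true in H3. exists i; simpl; auto.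
  - destruct IHFp as (L & K1 & K2 & K3 & K4 & K5 & K6).
    exists ((S i, j) :: L). split; [split; [|exact K1]|].
    { unfold trav_step; simpl; lia. }
    split; [rewrite last_cons'; exact K2|].
    split; [intros d [<-|Hd]; [assumption| apply K3; exact Hd]|].
    split.
    { intros j' Hj. destruct (K4 j' Hj) as [[i1 [A1 B1]] [i2 [A2 B2]]].
      split; [exists i1|exists i2]; split; auto; right; auto. }
    split.
    + destruct a; [left; auto|right]. simpl in K5. destruct (hmb x p i j) eqn:E.
      * apply hmb_true in E. exists i; split; [left; auto|auto].
      * destruct K5 as [K5|[i1 [A1 B1]]]; [discriminate|]. exists i1; split; [right; auto|auto].
    + destruct b; [left; auto|right]. simpl in K6. destruct (hxb x p i j) eqn:E.
      * apply hxb_true in E. exists i; split; [left; auto|auto].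
      * destruct K6 as [K6|[i1 [A1 B1]]]; [discriminate|]. exists i1; split; [right; auto|auto].
  - destruct IHFp as (L & H1' & H2' & H3' & H4' & H5' & H6').
    exists ((i, S j) :: L). split; [split; [|exact H1']|].
    { unfold trav_step; simpl; lia. }
    split; [rewrite last_cons'; exact H2'|].
    split; [intros d [<-|Hd]; [assumption| apply H3'; exact Hd]|].
    split.
    { intros j' Hj. destruct (Nat.eq_dec j' (S j)) as [->|Hne].
      - destruct H5' as [H5'|[i1 [A1 B1]]]; [discriminate|].
        destruct H6' as [H6'|[i2 [A2 B2]]]; [discriminate|].
        split; [exists i1|exists i2]; split; auto; right; auto.
      - destruct (H4' j') as [[i1 [A1 B1]] [i2 [A2 B2]]]; [lia|].
        split; [exists i1|exists i2]; split; auto; right; auto. }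
    split.
    + destruct a; [left; auto|right]. simpl in H0. apply hmb_true in H0. exists i; split; [left; auto|auto].
    + destruct b; [left; auto|right]. simpl in H1. apply hxb_true in H1. exists i; split; [left; auto|auto].
  - destruct IHFp as (L & H1' & H2' & H3' & H4' & H5' & H6').
    exists ((S i, S j) :: L). split; [split; [|exact H1']|].
    { unfold trav_step; simpl; lia. }
    split; [rewrite last_cons'; exact H2'|].
    split; [intros d [<-|Hd]; [assumption| apply H3'; exact Hd]|].
    split.
    { intros j' Hj. destruct (Nat.eq_dec j' (S j)) as [->|Hne].
      - destruct H5' as [H5'|[i1 [A1 B1]]]; [discriminate|].
        destruct H6' as [H6'|[i2 [A2 B2]]]; [discriminate|].
        split; [exists i1|exists i2]; split; auto; right; auto.
      - destruct (H4' j') as [[i1 [A1 B1]] [i2 [A2 B2]]]; [lia|].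
        split; [exists i1|exists i2]; split; auto; right; auto. }
    split.
    + destruct a; [left; auto|right]. simpl in H0. apply hmb_true in H0. exists i; split; [left; auto|auto].
    + destruct b; [left; auto|right]. simpl in H1. apply hxb_true in H1. exists i; split; [left; auto|auto].
Qed.

Lemma last_ge c L : trav_steps c L ->
  (fst c <= fst (last L c) /\ snd c <= snd (last L c))%nat.
Proof.
  revert c; induction L as [|d L IH]; intros c H; [simpl; lia|].
  destruct H as [Hs Ht]. rewrite last_cons'. specialize (IH d Ht).
  destruct (step_cases _ _ Hs) as [E|[E|E]]; rewrite E in *; simpl in *; lia.
Qed.

Lemma wit_tl x c L j v : wit x (c::L) j v -> snd c <> j -> wit x L j v.
Proof. intros [i [[H0|H] E]] Hn; [subst c; simpl in Hn; congruence| exists i; auto]. Qed.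
Lemma wit_cons x c L j v : wit x L j v -> wit x (c::L) j v.
Proof. intros [i [H E]]; exists i; split; [right|]; auto. Qed.

Lemma Fp_complete x p : forall L c a b, trav_steps c L ->
  last L c = (Nat.pred (length x), Nat.pred (length p)) ->
  (0 < length x)%nat -> (0 < length p)%nat ->
  (forall d, In d (c::L) -> inr x p (fst d) (snd d)) ->
  (forall j', (snd c < j' < length p)%nat -> wit x (c::L) j' (mn p j') /\ wit x (c::L) j' (mx p j')) ->
  (a = true \/ wit x (c::L) (snd c) (mn p (snd c))) ->
  (b = true \/ wit x (c::L) (snd c) (mx p (snd c))) ->
  Fp x p (fst c) (snd c) a b.
Proof.
  induction L as [|d L IH]; intros c a b Hst Hl Hz Hp Hin Hrows Ha Hb.
  - simpl in Hl. subst c. simpl in *. apply Fend.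
    + apply (Hin _ (or_introl eq_refl)).
    + lia.
    + lia.
    + destruct a; [reflexivity|]. destruct Ha as [Ha|[i [[E|[]] V]]]; [discriminate|].
      injection E; intros; subst. simpl. apply hmb_true. exact V.
    + destruct b; [reflexivity|]. destruct Hb as [Hb|[i [[E|[]] V]]]; [discriminate|].
      injection E; intros; subst. simpl. apply hxb_true. exact V.
  - destruct Hst as [Hs Ht]. rewrite last_cons' in Hl.
    pose proof (steps_bounds d L Ht) as Hb2. pose proof (last_ge d L Ht) as Hld.
    rewrite Hl in Hb2, Hld. simpl in Hb2, Hld.
    assert (Hinc : inr x p (fst c) (snd c)) by (apply Hin; left; reflexivity).
    assert (Hin' : forall e, In e (d::L) -> inr x p (fst e) (snd e)) by (intros e He; apply Hin; right; exact He).
    assert (Hrow : forall e, In e (d::L) -> (snd d <= snd e)%nat).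
    { intros e [<-|He]; [lia| apply Hb2 in He; lia]. }
    destruct c as [i j]. simpl in *.
    destruct (step_cases _ _ Hs) as [E|[E|E]]; simpl in E; subst d; simpl in *.
    + apply Fright; [exact Hinc|lia|].
      change (S i) with (fst (S i, j)). change j with (snd (S i, j)) at 1.
      apply IH; simpl; auto.
      * intros j' Hj'. destruct (Hrows j' ltac:(lia)) as [W1 W2].
        split; [apply wit_tl in W1|apply wit_tl in W2]; simpl; try lia; assumption.
      * destruct a; [left; reflexivity|]. destruct (hmb x p i j) eqn:Eh; [left; reflexivity|right].
        destruct Ha as [Ha|[i1 [[E1|H1] V]]]; [discriminate| |exists i1; auto].
        injection E1; intros; subst. apply hmb_true in V. congruence.
      * destruct b; [left; reflexivity|]. destruct (hxb x p i j) eqn:Eh; [left; reflexivity|right].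
        destruct Hb as [Hb|[i1 [[E1|H1] V]]]; [discriminate| |exists i1; auto].
        injection E1; intros; subst. apply hxb_true in V. congruence.
    + assert (Ha' : (a || hmb x p i j)%bool = true).
      { destruct a; [reflexivity|]. destruct Ha as [Ha|[i1 [[E1|H1] V]]]; [discriminate| |].
        - injection E1; intros; subst. simpl. apply hmb_true. exact V.
        - apply Hrow in H1. simpl in H1. lia. }
      assert (Hb' : (b || hxb x p i j)%bool = true).
      { destruct b; [reflexivity|]. destruct Hb as [Hb|[i1 [[E1|H1] V]]]; [discriminate| |].
        - injection E1; intros; subst. simpl. apply hxb_true. exact V.
        - apply Hrow in H1. simpl in H1. lia. }
      apply Fup; auto; [lia|].
      change i with (fst (i, S j)) at 1. change (S j) with (snd (i, S j)).
      apply IH; simpl; auto.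
      * intros j' Hj'. destruct (Hrows j' ltac:(lia)) as [W1 W2].
        split; [apply wit_tl in W1|apply wit_tl in W2]; simpl; try lia; assumption.
      * right. destruct (Hrows (S j) ltac:(lia)) as [W1 W2]. apply wit_tl in W1; simpl; [exact W1|lia].
      * right. destruct (Hrows (S j) ltac:(lia)) as [W1 W2]. apply wit_tl in W2; simpl; [exact W2|lia].
    + assert (Ha' : (a || hmb x p i j)%bool = true).
      { destruct a; [reflexivity|]. destruct Ha as [Ha|[i1 [[E1|H1] V]]]; [discriminate| |].
        - injection E1; intros; subst. simpl. apply hmb_true. exact V.
        - apply Hrow in H1. simpl in H1. lia. }
      assert (Hb' : (b || hxb x p i j)%bool = true).
      { destruct b; [reflexivity|]. destruct Hb as [Hb|[i1 [[E1|H1] V]]]; [discriminate| |].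
        - injection E1; intros; subst. simpl. apply hxb_true. exact V.
        - apply Hrow in H1. simpl in H1. lia. }
      apply Fdiag; auto; [lia|lia|].
      change (S i) with (fst (S i, S j)) at 1. change (S j) with (snd (S i, S j)).
      apply IH; simpl; auto.
      * intros j' Hj'. destruct (Hrows j' ltac:(lia)) as [W1 W2].
        split; [apply wit_tl in W1|apply wit_tl in W2]; simpl; try lia; assumption.
      * right. destruct (Hrows (S j) ltac:(lia)) as [W1 W2]. apply wit_tl in W1; simpl; [exact W1|lia].
      * right. destruct (Hrows (S j) ltac:(lia)) as [W1 W2]. apply wit_tl in W2; simpl; [exact W2|lia].
Qed.

Lemma math_iff x p :
  (exists T, is_traversal (length x) (length p) T /\ is_profile x T (length p) p) <->
  ((0 < length x)%nat /\ (0 < length p)%nat /\ Fp x p 0 0 false false).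
Proof.
  split.
  - intros [T [[Hz [Hl HT]] [_ Hpr]]].
    destruct T as [|c L]; [destruct HT|]. destruct HT as [-> [Hst Hlast]].
    rewrite last_cons' in Hlast.
    pose proof (steps_bounds _ _ Hst) as Hb. rewrite Hlast in Hb. simpl in Hb.
    assert (Hrow : forall d, In d ((0%nat,0%nat)::L) -> (snd d < length p)%nat).
    { intros d [<-|Hd]; simpl; [lia| apply Hb in Hd; lia]. }
    split; [exact Hz|]. split; [exact Hl|].
    change 0%nat with (fst (0%nat,0%nat)) at 1. change 0%nat with (snd (0%nat,0%nat)) at 1.
    apply (Fp_complete x p L); auto.
    + intros [i j] Hd. pose proof (Hrow _ Hd) as Hj. simpl in Hj.
      destruct (Hpr j Hj) as [[_ H1] [_ H2]]. unfold inr, mn, mx, xi; simpl.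
      split; [apply H1|apply H2]; exists i; split; auto.
    + intros j' Hj'. destruct (Hpr j' ltac:(lia)) as [[[i1 [A1 B1]] _] [[i2 [A2 B2]] _]].
      split; [exists i1|exists i2]; split; auto.
    + right. destruct (Hpr 0%nat Hl) as [[[i1 [A1 B1]] _] _]. exists i1; split; auto.
    + right. destruct (Hpr 0%nat Hl) as [_ [[i1 [A1 B1]] _]]. exists i1; split; auto.
  - intros [Hz [Hl HF]].
    destruct (Fp_sound _ _ _ _ _ _ HF) as (L & H1 & H2 & H3 & H4 & H5 & H6).
    exists ((0%nat,0%nat)::L). split.
    + split; [exact Hz|]. split; [exact Hl|]. split; [reflexivity|]. split; [exact H1|].
      rewrite last_cons'. exact H2.
    + split; [reflexivity|]. intros j Hj.
      assert (W : wit x ((0%nat,0%nat)::L) j (mn p j) /\ wit x ((0%nat,0%nat)::L) j (mx p j)).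
      { destruct j as [|j].
        - destruct H5 as [H5|W1]; [discriminate|]. destruct H6 as [H6|W2]; [discriminate|]. auto.
        - apply H4. lia. }
      destruct W as [[i1 [A1 B1]] [i2 [A2 B2]]].
      split; split.
      * exists i1. split; auto.
      * intros y [i [Hi ->]]. apply (H3 _ Hi).
      * exists i2. split; auto.
      * intros y [i [Hi ->]]. apply (H3 _ Hi).
Qed.


Definition Bor a b := BNot (BAnd (BNot a) (BNot b)).
Definition setb r b := CIf b (CNAsgn r (NConst 1)) (CNAsgn r (NConst 0)).
Definition storeb e1 e2 b := CIf b (CNStore e1 e2 (NConst 1)) (CNStore e1 e2 (NConst 0)).

Definition sb x p r b s := mkState (upd (nvars s) r (if beval x p s b then 1%nat else 0%nat)) (rvars s) (nmem s) (rmem s).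
Definition st x p e1 e2 b s := mkState (nvars s) (rvars s)
   (upd2 (nmem s) (neval x p s e1) (neval x p s e2) (if beval x p s b then 1%nat else 0%nat)) (rmem s).

Lemma exec_setb x p s r b : exec x p s (setb r b) 2 (sb x p r b s).
Proof. unfold setb, sb. destruct (beval x p s b) eqn:E; [apply ExIfT|apply ExIfF]; auto; constructor. Qed.
Lemma exec_storeb x p s e1 e2 b : exec x p s (storeb e1 e2 b) 2 (st x p e1 e2 b s).
Proof. unfold storeb, st. destruct (beval x p s b) eqn:E; [apply ExIfT|apply ExIfF]; auto; constructor. Qed.

Lemma while_cd x p ctr body cb (P : nat -> state -> Prop) :
  (forall n s, P (S n) s -> nvars s ctr = S n -> exists s', exec x p s body cb s' /\ P n s' /\ nvars s' ctr = n) ->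
  forall n s, P n s -> nvars s ctr = n ->
  exists s', exec x p s (CWhile (BLtN (NConst 0) (NVar ctr)) body) (n * S cb + 1) s' /\ P 0%nat s'.
Proof.
  intros Hb. induction n as [|n IH]; intros s HP Hc.
  - exists s. split; [|exact HP]. simpl. apply ExWhileF. simpl. rewrite Hc. reflexivity.
  - destruct (Hb n s HP Hc) as [s1 [E1 [P1 C1]]].
    destruct (IH s1 P1 C1) as [s2 [E2 P2]].
    exists s2. split; [|exact P2].
    replace (S n * S cb + 1)%nat with (S (cb + (n * S cb + 1))) by lia.
    eapply ExWhileT; [simpl; rewrite Hc; reflexivity| exact E1| exact E2].
Qed.

Definition rI := 1%nat. Definition rJ := 2%nat. Definition rJ4 := 3%nat.
Definition rHM := 4%nat. Definition rHX := 5%nat. Definition rV := 6%nat. Definition rE := 7%nat.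

Definition bHM := BEqR (RX (NVar 1)) (RPmin (NVar 2)).
Definition bHX := BEqR (RX (NVar 1)) (RPmax (NVar 2)).
Definition bV := BAnd (BNot (BLtR (RX (NVar 1)) (RPmin (NVar 2)))) (BNot (BLtR (RPmax (NVar 2)) (RX (NVar 1)))).
Definition bE := Bor (BAnd (BEqN (NVar 1) (NSub NLenX (NConst 1))) (BEqN (NVar 2) (NSub NLenP (NConst 1))))
   (BAnd (BLtN (NAdd (NVar 2) (NConst 1)) NLenP)
     (Bor (BEqN (NMem (NAdd (NVar 3) (NConst 4)) (NVar 1)) (NConst 1))
          (BAnd (BLtN (NAdd (NVar 1) (NConst 1)) NLenX)
                (BEqN (NMem (NAdd (NVar 3) (NConst 4)) (NAdd (NVar 1) (NConst 1))) (NConst 1))))).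
Definition fidx (a b : bool) : nat := ((if a then 1 else 0) + (if a then 1 else 0) + (if b then 1 else 0))%nat.
Definition fA (a : bool) := if a then NConst 1 else NVar 4.
Definition fB (b : bool) := if b then NConst 1 else NVar 5.
Definition fcond a b :=
  BAnd (BEqN (NVar 6) (NConst 1))
   (Bor (BAnd (BAnd (BEqN (fA a) (NConst 1)) (BEqN (fB b) (NConst 1))) (BEqN (NVar 7) (NConst 1)))
        (BAnd (BLtN (NAdd (NVar 1) (NConst 1)) NLenX)
              (BEqN (NMem (NAdd (NVar 3) (NAdd (NAdd (fA a) (fA a)) (fB b))) (NAdd (NVar 1) (NConst 1))) (NConst 1)))).
Definition fl a b := storeb (NAdd (NVar 3) (NConst (fidx a b))) (NVar 1) (fcond a b).
Definition cell := CSeq (setb 4 bHM) (CSeq (setb 5 bHX) (CSeq (setb 6 bV) (CSeq (setb 7 bE)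
   (CSeq (fl false false) (CSeq (fl false true) (CSeq (fl true false) (fl true true))))))).
Definition inner := CWhile (BLtN (NConst 0) (NVar 1)) (CSeq (CNAsgn 1 (NSub (NVar 1) (NConst 1))) cell).
Definition outer := CWhile (BLtN (NConst 0) (NVar 2))
   (CSeq (CNAsgn 2 (NSub (NVar 2) (NConst 1))) (CSeq (CNAsgn 3 (NSub (NVar 3) (NConst 4)))
     (CSeq (CNAsgn 1 NLenX) inner))).
Definition prog := CIf (BAnd (BLtN (NConst 0) NLenX) (BLtN (NConst 0) NLenP))
  (CSeq (CNAsgn 2 NLenP) (CSeq (CNAsgn 3 (NAdd (NAdd NLenP NLenP) (NAdd NLenP NLenP)))
    (CSeq outer (setb 0 (BEqN (NMem (NConst 0) (NConst 0)) (NConst 1))))))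
  CSkip.

Definition vb x p i j : bool :=
  negb (if Rlt_dec (xi x i) (mn p j) then true else false) && negb (if Rlt_dec (mx p j) (xi x i) then true else false).
Lemma vb_true x p i j : vb x p i j = true <-> inr x p i j.
Proof.
  unfold vb, inr. destruct Rlt_dec; destruct Rlt_dec; simpl; split; intros H; try discriminate; try lra.
Qed.

Definition Exit x p n j : Prop :=
  (S n = length x /\ S j = length p) \/
  ((S j < length p)%nat /\ (Fp x p n (S j) false false \/ ((S n < length x)%nat /\ Fp x p (S n) (S j) false false))).

Lemma Fp_rec x p n j a b : (n < length x)%nat ->
  Fp x p n j a b <-> inr x p n j /\
   (((a || hmb x p n j)%bool = true /\ (b || hxb x p n j)%bool = true /\ Exit x p n j) \/
    ((S n < length x)%nat /\ Fp x p (S n) j (a || hmb x p n j) (b || hxb x p n j))).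
Proof.
  intros Hn. split.
  - intros H; inversion H; subst; unfold Exit; split; auto; tauto.
  - intros [Hv [[Ha [Hb [[E1 E2]|[E1 [E2|[E3 E2]]]]]]|[E1 E2]]].
    + apply Fend; auto.
    + apply Fup; auto.
    + apply Fdiag; auto.
    + apply Fright; auto.
Qed.

Definition Q x p n j s :=
  nvars s 1 = n /\ nvars s 2 = j /\ nvars s 3 = (4*j)%nat /\
  nvars s 4 = (if hmb x p n j then 1 else 0)%nat /\
  nvars s 5 = (if hxb x p n j then 1 else 0)%nat /\
  nvars s 6 = (if vb x p n j then 1 else 0)%nat /\
  (nvars s 7 = 1%nat <-> Exit x p n j) /\
  (forall a b, (S n < length x)%nat -> (nmem s (4*j + fidx a b) (S n) = 1%nat <-> Fp x p (S n) j a b)).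

Lemma fA_eval x p s (a h : bool) : nvars s 4 = (if h then 1 else 0)%nat ->
  neval x p s (fA a) = (if (a || h)%bool then 1 else 0)%nat.
Proof. destruct a; simpl; auto. Qed.
Lemma fB_eval x p s (a h : bool) : nvars s 5 = (if h then 1 else 0)%nat ->
  neval x p s (fB a) = (if (a || h)%bool then 1 else 0)%nat.
Proof. destruct a; simpl; auto. Qed.

Lemma eqb1 (c : bool) : Nat.eqb (if c then 1 else 0)%nat 1 = c.
Proof. destruct c; reflexivity. Qed.


Lemma fcond_ok x p n j s a b : (n < length x)%nat -> Q x p n j s ->
  (beval x p s (fcond a b) = true <-> Fp x p n j a b).
Proof.
  intros Hn (H1 & H2 & H3 & H4 & H5 & H6 & H7 & H8).
  rewrite (Fp_rec x p n j a b Hn).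
  unfold fcond, Bor. cbn [beval neval].
  rewrite (fA_eval _ _ _ a _ H4), (fB_eval _ _ _ b _ H5), H1, H3, H6, !eqb1.
  replace (4 * j + ((if (a || hmb x p n j)%bool then 1 else 0) + (if (a || hmb x p n j)%bool then 1 else 0)
     + (if (b || hxb x p n j)%bool then 1 else 0)))%nat
    with (4 * j + fidx (a || hmb x p n j) (b || hxb x p n j))%nat by reflexivity.
  rewrite Nat.add_1_r.
  rewrite <- (vb_true x p n j).
  remember (a || hmb x p n j)%bool as a'. remember (b || hxb x p n j)%bool as b'.
  clear Heqa' Heqb'.
  destruct (Nat.eqb_spec (nmem s (4 * j + fidx a' b') (S n)) 1) as [M|M];
  destruct (Nat.ltb_spec (S n) (length x)) as [Lt|Lt];
  destruct (Nat.eqb_spec (nvars s 7) 1) as [E7|E7];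
  destruct (vb x p n j); destruct a'; destruct b'; cbn [andb negb];
  try (rewrite (H8 _ _ Lt) in M);
  split; intros; try discriminate; try tauto; try lia;
  try (destruct H as [_ [[? [? ?]]|[? ?]]]); try discriminate; try tauto; try lia.
Qed.

Definition tab x p s (done : nat -> nat -> Prop) := forall i j a b, done i j ->
  (nmem s (4*j + fidx a b) i = 1%nat <-> Fp x p i j a b).
Definition done_in (x : list R) (p : list (R*R)) j n i' j' :=
  ((j < j' < length p)%nat /\ (i' < length x)%nat) \/ (j' = j /\ (n <= i' < length x)%nat).

Definition s4 x p s := sb x p 7 bE (sb x p 6 bV (sb x p 5 bHX (sb x p 4 bHM s))).

Lemma Q_s4 x p n j s : (n < length x)%nat -> (j < length p)%nat ->
  nvars s 1 = n -> nvars s 2 = j -> nvars s 3 = (4*j)%nat -> tab x p s (done_in x p j (S n)) ->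
  Q x p n j (s4 x p s).
Proof.
  intros Hn Hj H1 H2 H3 HT.
  unfold Q, s4, sb, upd; cbn [nvars nmem Nat.eqb].
  unfold bHM, bHX, bV, bE, Bor; cbn [beval neval reval nvars nmem Nat.eqb upd].
  unfold upd; cbn [Nat.eqb].
  rewrite H1, H2, H3.
  split; [reflexivity|]. split; [reflexivity|]. split; [reflexivity|].
  split; [reflexivity|]. split; [reflexivity|]. split; [reflexivity|].
  split.
  - assert (HA : (S j < length p)%nat -> (nmem s (4 * j + 4) n = 1%nat <-> Fp x p n (S j) false false)).
    { intros Hl. replace (4*j+4)%nat with (4 * S j + fidx false false)%nat by (cbn; lia).
      apply HT. left. lia. }
    assert (HB : (S j < length p)%nat -> (S n < length x)%nat ->
       (nmem s (4 * j + 4) (S n) = 1%nat <-> Fp x p (S n) (S j) false false)).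
    { intros Hl Hl2. replace (4*j+4)%nat with (4 * S j + fidx false false)%nat by (cbn; lia).
      apply HT. left. lia. }
    rewrite !Nat.add_1_r. unfold Exit.
    destruct (Nat.eqb_spec n (length x - 1)) as [E1|E1];
    destruct (Nat.eqb_spec j (length p - 1)) as [E2|E2];
    destruct (Nat.ltb_spec (S j) (length p)) as [L1|L1];
    destruct (Nat.ltb_spec (S n) (length x)) as [L2|L2];
    destruct (Nat.eqb_spec (nmem s (4 * j + 4) n) 1) as [M1|M1];
    destruct (Nat.eqb_spec (nmem s (4 * j + 4) (S n)) 1) as [M2|M2];
    cbn [andb negb]; try (rewrite (HA L1) in M1); try (rewrite (HB L1 L2) in M2);
    split; intros; try discriminate; try lia; try tauto;
    try (destruct H as [[? ?]|[? [?|[? ?]]]]; try lia; tauto).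
  - intros a b Hl. apply HT. right. split; [reflexivity|lia].
Qed.

Definition stf x p a b s := st x p (NAdd (NVar 3) (NConst (fidx a b))) (NVar 1) (fcond a b) s.

Lemma Q_st x p n j s a b : Q x p n j s -> Q x p n j (stf x p a b s).
Proof.
  intros (H1 & H2 & H3 & H4 & H5 & H6 & H7 & H8).
  unfold Q, stf, st; cbn [nvars nmem neval].
  do 7 (split; [assumption|]).
  intros a0 b0 Hl; unfold upd2; rewrite H1; rewrite (proj2 (Nat.eqb_neq (S n) n)) by lia;
    rewrite Bool.andb_false_r; apply H8; auto.
Qed.

Lemma val_ok x p n j t a b : (n < length x)%nat -> Q x p n j t ->
  ((if beval x p t (fcond a b) then 1 else 0)%nat = 1%nat <-> Fp x p n j a b).
Proof.
  intros Hn HQ. rewrite <- (fcond_ok x p n j t a b Hn HQ).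
  destruct (beval x p t (fcond a b)); split; intros; auto; discriminate.
Qed.

Definition sF x p s := stf x p true true (stf x p true false (stf x p false true (stf x p false false (s4 x p s)))).

Lemma exec_cell x p s : exec x p s cell 16 (sF x p s).
Proof.
  unfold cell, sF, s4.
  change 16%nat with (2+(2+(2+(2+(2+(2+(2+2)))))))%nat.
  repeat (eapply ExSeq; [first [apply exec_setb | apply exec_storeb]|]).
  apply exec_storeb.
Qed.

Lemma cell_ok x p n j s : (n < length x)%nat -> (j < length p)%nat ->
  nvars s 1 = n -> nvars s 2 = j -> nvars s 3 = (4*j)%nat -> tab x p s (done_in x p j (S n)) ->
  nvars (sF x p s) 1 = n /\ nvars (sF x p s) 2 = j /\ nvars (sF x p s) 3 = (4*j)%nat /\
  tab x p (sF x p s) (done_in x p j n).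
Proof.
  intros Hn Hj H1 H2 H3 HT.
  pose proof (Q_s4 x p n j s Hn Hj H1 H2 H3 HT) as Q0.
  pose proof (Q_st _ _ _ _ _ false false Q0) as Q1.
  pose proof (Q_st _ _ _ _ _ false true Q1) as Q2.
  pose proof (Q_st _ _ _ _ _ true false Q2) as Q3.
  pose proof (Q_st _ _ _ _ _ true true Q3) as Q4.
  destruct Q4 as (K1 & K2 & K3 & _). unfold sF.
  split; [exact K1|]. split; [exact K2|]. split; [exact K3|].
  pose proof Q0 as Q0'. destruct Q0' as (R1 & R2 & R3 & _).
  intros i' j' a b Hd.
  set (t0 := s4 x p s) in *.
  set (t1 := stf x p false false t0) in *.
  set (t2 := stf x p false true t1) in *.
  set (t3 := stf x p true false t2) in *.
  unfold stf at 1, st at 1. cbn [nmem neval].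
  unfold t3 at 1, stf at 1, st at 1. cbn [nmem neval].
  unfold t2 at 1, stf at 1, st at 1. cbn [nmem neval].
  unfold t1 at 1, stf at 1, st at 1. cbn [nmem neval].
  pose proof Q1 as Q1'. pose proof Q2 as Q2'. pose proof Q3 as Q3'.
  destruct Q1' as (S11 & _ & S13 & _). destruct Q2' as (S21 & _ & S23 & _).
  destruct Q3' as (S31 & _ & S33 & _).
  rewrite R1, R3, S11, S13, S21, S23, S31, S33.
  change (nmem t0) with (nmem s).
  unfold upd2.
  destruct (Nat.eqb_spec i' n) as [Ei|Ei].
  - subst i'. rewrite !Bool.andb_true_r.
    destruct a, b; cbv [fidx];
    repeat match goal with |- context [Nat.eqb ?u ?v] => destruct (Nat.eqb_spec u v); try lia end;
    first [ assert (j' = j) by lia; subst j'; apply val_ok; assumption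
          | match goal with |- _ <-> Fp _ _ _ _ ?a ?b => apply (HT _ _ a b) end; destruct Hd as [Hd|[Hd1 Hd2]]; [left; exact Hd| lia] ].
  - rewrite !Bool.andb_false_r.
    apply HT. destruct Hd as [Hd|[Hd1 Hd2]]; [left; exact Hd| right; split; [exact Hd1|lia]].
Qed.

Definition Pin (x : list R) (p : list (R*R)) j n s :=
  (n <= length x)%nat /\ nvars s 2 = j /\ nvars s 3 = (4*j)%nat /\ tab x p s (done_in x p j n).

Lemma inner_ok x p j : (j < length p)%nat -> forall s, Pin x p j (length x) s -> nvars s 1 = length x ->
  exists s', exec x p s inner (length x * 18 + 1) s' /\ Pin x p j 0 s'.
Proof.
  intros Hj s HP Hc. unfold inner.
  apply (while_cd x p 1 _ 17 (Pin x p j)); auto.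
  intros n s0 (P1 & P2 & P3 & P4) C.
  set (s1 := mkState (upd (nvars s0) 1 (neval x p s0 (NSub (NVar 1) (NConst 1)))) (rvars s0) (nmem s0) (rmem s0)).
  assert (E1 : nvars s1 1 = n) by (unfold s1, upd; cbn; rewrite C; lia).
  assert (E2 : nvars s1 2 = j) by (unfold s1, upd; cbn; exact P2).
  assert (E3 : nvars s1 3 = (4*j)%nat) by (unfold s1, upd; cbn; exact P3).
  assert (T1 : tab x p s1 (done_in x p j (S n))) by exact P4.
  destruct (cell_ok x p n j s1 ltac:(lia) Hj E1 E2 E3 T1) as (F1 & F2 & F3 & F4).
  exists (sF x p s1). split.
  - change 17%nat with (1 + 16)%nat. eapply ExSeq; [apply ExNAsgn| apply exec_cell].
  - split; [|exact F1]. unfold Pin. split; [lia|]. auto.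
Qed.

Definition done_out (x : list R) (p : list (R*R)) m i' j' := (m <= j' < length p)%nat /\ (i' < length x)%nat.
Definition Pout (x : list R) (p : list (R*R)) m s :=
  (m <= length p)%nat /\ nvars s 3 = (4*m)%nat /\ tab x p s (done_out x p m).

Lemma outer_ok x p : forall s, Pout x p (length p) s -> nvars s 2 = length p ->
  exists s', exec x p s outer (length p * S (length x * 18 + 4) + 1) s' /\ Pout x p 0 s'.
Proof.
  intros s HP Hc. unfold outer.
  apply (while_cd x p 2 _ _ (Pout x p)); auto.
  intros m s0 (P1 & P3 & P4) C.
  set (s1 := mkState (upd (nvars s0) 2 (neval x p s0 (NSub (NVar 2) (NConst 1)))) (rvars s0) (nmem s0) (rmem s0)).
  set (s2 := mkState (upd (nvars s1) 3 (neval x p s1 (NSub (NVar 3) (NConst 4)))) (rvars s1) (nmem s1) (rmem s1)).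
  set (s3 := mkState (upd (nvars s2) 1 (neval x p s2 NLenX)) (rvars s2) (nmem s2) (rmem s2)).
  assert (HPi : Pin x p m (length x) s3).
  { unfold Pin, s3, s2, s1, upd; cbn. rewrite C, P3. split; [lia|]. split; [lia|]. split; [lia|].
    intros i' j' a b Hd. apply P4. unfold done_in, done_out in *. lia. }
  assert (Hc3 : nvars s3 1 = length x) by (unfold s3, upd; cbn; reflexivity).
  destruct (inner_ok x p m ltac:(lia) s3 HPi Hc3) as [s4' [Ex [Q1 [Q2 [Q3 Q4]]]]].
  exists s4'. split; [|split].
  - replace (length x * 18 + 4)%nat with (1 + (1 + (1 + (length x * 18 + 1))))%nat by lia.
    eapply ExSeq; [apply ExNAsgn|]. eapply ExSeq; [apply ExNAsgn|]. eapply ExSeq; [apply ExNAsgn|].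
    exact Ex.
  - unfold Pout. split; [lia|]. split; [exact Q3|].
    intros i' j' a b Hd. apply Q4. unfold done_in, done_out in *. lia.
  - exact Q2.
Qed.

Theorem lemma9p16 :
  exists (prog : cmd) (C : nat),
    forall (x : list R) (p : list (R * R)),
      (forall j, (j < length p)%nat ->
         set_of x (fst (nth j p (0%R, 0%R))) /\
         set_of x (snd (nth j p (0%R, 0%R)))) ->
      exists (k : nat) (s' : state),
        exec x p init_state prog k s' /\
        (k <= C * (length x * length p) + C)%nat /\
        (output s' = true <->
         exists T, is_traversal (length x) (length p) T /\
                   is_profile x T (length p) p).
Proof.
  exists prog, 30%nat. intros x p _.
  destruct (Nat.ltb_spec 0 (length x)) as [Hz|Hz]; [destruct (Nat.ltb_spec 0 (length p)) as [Hl|Hl]|].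
  - set (sa := mkState (upd (nvars init_state) 2 (neval x p init_state NLenP)) (rvars init_state) (nmem init_state) (rmem init_state)).
    set (sb0 := mkState (upd (nvars sa) 3 (neval x p sa (NAdd (NAdd NLenP NLenP) (NAdd NLenP NLenP)))) (rvars sa) (nmem sa) (rmem sa)).
    assert (HP : Pout x p (length p) sb0).
    { unfold Pout, sb0, sa, upd; cbn. split; [lia|]. split; [lia|].
      intros i' j' a b Hd. unfold done_out in Hd. lia. }
    assert (Hc : nvars sb0 2 = length p) by (unfold sb0, sa, upd; cbn; reflexivity).
    destruct (outer_ok x p sb0 HP Hc) as [sc [Ex [_ [_ HT]]]].
    exists (S (1 + (1 + ((length p * S (length x * 18 + 4) + 1) + 2))))%nat.
    exists (sb x p 0 (BEqN (NMem (NConst 0) (NConst 0)) (NConst 1)) sc).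
    split; [|split].
    + apply ExIfT; [cbn [beval neval]; rewrite (proj2 (Nat.ltb_lt _ _) Hz), (proj2 (Nat.ltb_lt _ _) Hl); reflexivity|].
      eapply ExSeq; [apply ExNAsgn|]. eapply ExSeq; [apply ExNAsgn|].
      eapply ExSeq; [exact Ex| apply exec_setb].
    + nia.
    + rewrite math_iff. unfold output, sb, upd; cbn.
      assert (H0 := HT 0%nat 0%nat false false ltac:(unfold done_out; lia)).
      cbn in H0.
      destruct (Nat.eqb_spec (nmem sc 0 0) 1) as [M|M]; cbn; split; intros; try tauto; try discriminate.
  - exists 2%nat, init_state. split; [|split].
    + apply ExIfF; [cbn [beval neval]; rewrite (proj2 (Nat.ltb_lt _ _) Hz); destruct (length p); [reflexivity|lia]|]. constructor.
    + lia.
    + rewrite math_iff. cbn. split; [discriminate| lia].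
  - exists 2%nat, init_state. split; [|split].
    + apply ExIfF; [cbn; destruct (length x); [reflexivity|lia]|]. constructor.
    + lia.
    + rewrite math_iff. cbn. split; [discriminate| lia].
Qed.
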